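(* Let $(G,\Omega)$ be an $\ell$-permutation group that is o-2 transitive, and let $g,h\in G$ with $h\neq1$ and $\mathrm{supp}(h)\cap\mathrm{supp}(h^g)=\emptyset$. Then there are $f,k\in G$ such that $$[h^{-1},h^f]\,[h^{-g},h^{gk}]\neq[h^{-g},h^{gk}]\,[h^{-1},h^f].$$
   Context: An $\ell$-permutation group $(G,\Omega)$ is a totally ordered set $\Omega$ with a subgroup $G$ of $\mathrm{Aut}(\Omega,\leqslant)$ (acting on the right) closed under pointwise max and min. It is o-2 transitive if $G$ acts transitively on pairs $(\alpha,\beta)$ with $\alpha<\beta$. $\mathrm{supp}(g)=\{\alpha:\alpha g\ne\alpha\}$, $g^f=f^{-1}gf$, $h^{-g}=(h^g)^{-1}$, $[a,b]=a^{-1}b^{-1}ab$. *)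

(* Defs.v *)
From HB Require Import structures.
From mathcomp Require Import all_boot all_order.
From Stdlib Require Import ClassicalEpsilon.
Set Implicit Arguments. Unset Strict Implicit. Unset Printing Implicit Defensive.
Import Order.TTheory.
Local Open Scope order_scope.

Section LPerm.
Context {disp : Order.disp_t} {T : orderType disp}.

Definition order_aut (f : T -> T) : Prop :=
  bijective f /\ {mono f : x y / x <= y}.

(* the inverse function (chosen by choice; it is the genuine inverse
   whenever f is bijective) *)
Definition oinv (f : T -> T) : T -> T :=
  fun y => epsilon (inhabits y) (fun x => f x = y).

(* Right action: alpha (a b) = (alpha a) b, i.e. a b acts as b \o a. *)
Definition pmul (a b : T -> T) : T -> T := fun x => b (a x).

Definition pconj (h f : T -> T) : T -> T := pmul (pmul (oinv f) h) f.

Definition pcomm (a b : T -> T) : T -> T :=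
  pmul (pmul (pmul (oinv a) (oinv b)) a) b.

Definition psupp (h : T -> T) : T -> Prop := fun x => h x <> x.

Definition l_perm_group (G : (T -> T) -> Prop) : Prop :=
  [/\ (forall f, G f -> order_aut f),
      G id,
      (forall f g, G f -> G g -> G (pmul f g)),
      (forall f, G f -> G (oinv f))
    & (forall f g, G f -> G g ->
         G (fun x => Order.max (f x) (g x)) /\ G (fun x => Order.min (f x) (g x)))].

Definition o2_transitive (G : (T -> T) -> Prop) : Prop :=
  forall a b c e : T, a < b -> c < e ->
    exists g, G g /\ g a = c /\ g b = e.

End LPerm.

(* Main.v *)
Require Import Defs.
From HB Require Import structures.
From mathcomp Require Import all_boot all_order.
From Stdlib Require Import ClassicalEpsilon FunctionalExtensionality Classical.
Set Implicit Arguments. Unset Strict Implicit. Unset Printing Implicit Defensive.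
Import Order.TTheory.
Local Open Scope order_scope.

Section Aux.
Context {disp : Order.disp_t} {T : orderType disp}.
Implicit Types (f : T -> T) (G : (T -> T) -> Prop).

Lemma oinv_spec f y : (exists x, f x = y) -> f (oinv f y) = y.
Proof. by move=> H; apply: (epsilon_spec (inhabits y) (fun x => f x = y)). Qed.

Lemma oinvK f : order_aut f -> forall y, f (oinv f y) = y.
Proof. by case=> [[g' fg gf] _] y; apply: oinv_spec; exists (g' y). Qed.

Lemma oinvE f : order_aut f -> forall x, oinv f (f x) = x.
Proof.
move=> Hf x; have [[g' fg gf] _] := Hf.
by apply: (can_inj fg); rewrite oinvK.
Qed.

Lemma oinv2 f : order_aut f -> forall x, oinv (oinv f) x = f x.
Proof.
move=> Hf x.
have H : oinv f (oinv (oinv f) x) = x.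
  by apply: oinv_spec; exists (f x); rewrite oinvE.
by rewrite -[in RHS]H oinvK.
Qed.

Lemma aut_lt f : order_aut f -> forall x y, (f x < f y) = (x < y).
Proof. by case=> _ Hm x y; rewrite !ltNge Hm. Qed.

Lemma aut_le f : order_aut f -> forall x y, (f x <= f y) = (x <= y).
Proof. by case=> _ Hm x y; rewrite Hm. Qed.

Lemma o3 G : l_perm_group G -> o2_transitive G ->
  forall a b c a' b' c' : T, a < b -> b < c -> a' < b' -> b' < c' ->
  exists F, G F /\ F a = a' /\ F b = b' /\ F c = c'.
Proof.
case=> _ _ _ _ Hl Ho a b c a' b' c' ab bc ab' bc'.
have [p [Gp [pa pb]]] := Ho a b a' b' ab ab'.
have [r [Gr [rb rc]]] := Ho b c b' c' bc bc'.
have [q [Gq [qa qc]]] := Ho a c a' c' (lt_trans ab bc) (lt_trans ab' bc').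
have [GM GN] := Hl p r Gp Gr.
have [GK _] := Hl _ _ GM Gq.
have [_ GK'] := Hl _ _ GM Gq.
have [GF _] := Hl _ _ GK' GN.
eexists; split; first exact: GF.
rewrite /= pa pb rb rc qa qc; split; last split.
- rewrite (@min_r _ _ (Order.max a' (r a))); last by rewrite le_max lexx.
  by rewrite max_l // ge_min lexx.
- rewrite maxxx minxx; apply: max_r; by rewrite ge_min lexx.
- rewrite (@min_r _ _ (Order.max (p c) c')); last by rewrite le_max lexx orbT.
  by rewrite max_l // ge_min lexx orbT.
Qed.

Lemma Gaut G : l_perm_group G -> forall f, G f -> order_aut f.
Proof. by case. Qed.

Lemma Gconj G : l_perm_group G -> forall h f, G h -> G f -> G (pconj h f).
Proof.
move=> [_ _ Hm Hi _] h f Gh Gf; rewrite /pconj.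
exact: (Hm _ _ (Hm _ _ (Hi _ Gf) Gh) Gf).
Qed.

Lemma core G : l_perm_group G -> o2_transitive G ->
  forall H1 H2 : T -> T, G H1 -> G H2 ->
  (forall x, H1 x <> x -> H2 x = x) -> (forall x, H2 x <> x -> H1 x = x) ->
  forall c0 d0 : T, c0 < H1 c0 -> d0 < H2 d0 -> H1 c0 < d0 ->
  exists f k, G f /\ G k /\
    pmul (pcomm (oinv H1) (pconj H1 f)) (pcomm (oinv H2) (pconj H2 k)) <>
    pmul (pcomm (oinv H2) (pconj H2 k)) (pcomm (oinv H1) (pconj H1 f)).
Proof.
move=> HG Ho H1 H2 G1 G2 dis12 dis21 c0 d0 hc hd hcd.
have A1 := Gaut HG G1; have A2 := Gaut HG G2.
set c1 := H1 c0; set cm := oinv H1 c0; set d1 := H2 d0; set d2 := H2 d1.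
have hd1 : d1 < d2 by rewrite /d2 aut_lt.
have hcm : cm < c0 by rewrite -(aut_lt A1) /cm oinvK.
have c0d1 : c0 < d1 by apply: lt_trans hc (lt_trans hcd hd).
have [f [Gf [f0 [f1 f2]]]] := o3 HG Ho hc hcd (lt_trans hc hcd) hd.
have [k [Gk [k0 [k1 k2]]]] := o3 HG Ho c0d1 hd1 hd hd1.
exists f, k; split=> //; split=> //.
have Af := Gaut HG Gf; have Ak := Gaut HG Gk.
set u := pconj H1 f; set v := pconj H2 k.
have Au := Gaut HG (Gconj HG G1 Gf); have Av := Gaut HG (Gconj HG G2 Gk).
have H1d0 : H1 d0 = d0 by apply: dis21; move=> e; move: hd; rewrite /d1 e ltxx.
have H1d1 : H1 d1 = d1 by apply: dis21; move=> e; move: hd1; rewrite /d2 e ltxx.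
have H2c0 : H2 c0 = c0 by apply: dis12; move=> e; move: hc; rewrite /c1 e ltxx.
have {}f1 : f c1 = d0 := f1. have {}f2 : f d0 = d1 := f2.
have {}k1 : k d1 = d1 := k1. have {}k2 : k d2 = d2 := k2.
have uc0 : u c0 = d0.
  rewrite /u /pconj /pmul; have -> : oinv f c0 = c0 by rewrite -{1}f0 oinvE.
  exact: f1.
have ud1 : u d1 = d1.
  rewrite /u /pconj /pmul; have -> : oinv f d1 = d0 by rewrite -f2 oinvE.
  by rewrite H1d0.
have vd0 : v d0 = d0.
  rewrite /v /pconj /pmul; have -> : oinv k d0 = c0 by rewrite -k0 oinvE.
  by rewrite H2c0.
have vd1 : v d1 = d2.
  rewrite /v /pconj /pmul; have -> : oinv k d1 = d1 by rewrite -{1}k1 oinvE.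
  exact: k2.
have iu0 : oinv u d0 = c0 by rewrite -uc0 oinvE.
have iu1 : oinv u d1 = d1 by rewrite -{1}ud1 oinvE.
have iv2 : oinv v d2 = d1 by rewrite -vd1 oinvE.
have iH1 : oinv H1 d1 = d1 by rewrite -{1}H1d1 oinvE.
have iH2 : oinv H2 d1 = d0 by rewrite oinvE.
move=> /(congr1 (fun F => F d1)); rewrite /pmul /pcomm /pmul !oinv2 //.
rewrite H1d1 iu1 iH1 ud1 -/d2 iv2 iH2 vd0 H1d0 iu0 -/cm => E.
have : u cm < u c0 by rewrite (aut_lt Au).
by rewrite uc0 -E ltxx.
Qed.

Lemma main_inc G : l_perm_group G -> o2_transitive G ->
  forall g h : T -> T, G g -> G h ->
  (forall x : T, psupp h x -> ~ psupp (pconj h g) x) ->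
  forall a, a < h a ->
  exists f k : T -> T, G f /\ G k /\
    pmul (pcomm (oinv h) (pconj h f))
         (pcomm (oinv (pconj h g)) (pconj h (pmul g k)))
    <>
    pmul (pcomm (oinv (pconj h g)) (pconj h (pmul g k)))
         (pcomm (oinv h) (pconj h f)).
Proof.
move=> HG Ho g h Gg Gh hdisj a ha.
have Hm : forall f g, G f -> G g -> G (pmul f g) by case: HG.
have G2 := Gconj HG Gh Gg; set H2 := pconj h g in G2 *.
have Ag := Gaut HG Gg; have Ah := Gaut HG Gh; have A2 := Gaut HG G2.
have dis12 : forall x, h x <> x -> H2 x = x.
  by move=> x hx; apply: NNPP; apply: hdisj.
have dis21 : forall x, H2 x <> x -> h x = x.
  by move=> x hx; apply: NNPP => hx'; exact: (hdisj x hx' hx).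
have conjeq : forall k, G k -> pconj h (pmul g k) = pconj H2 k.
  move=> k Gk; apply: functional_extensionality => x.
  have Ak := Gaut HG Gk; have Agk := Gaut HG (Hm _ _ Gg Gk).
  have E : oinv (pmul g k) x = oinv g (oinv k x).
    have P : pmul g k (oinv g (oinv k x)) = x by rewrite /pmul !oinvK.
    by rewrite -{1}P oinvE.
  change (pmul g k (h (oinv (pmul g k) x)) = k (H2 (oinv k x))).
  by rewrite E /H2 /pconj /pmul.
have H2g : forall y, H2 (g y) = g (h y) by move=> y; rewrite /H2 /pconj /pmul oinvE.
have hne : h a <> a by move=> e; move: ha; rewrite e ltxx.
have hga : h (g a) = g a.
  apply: dis21; rewrite H2g => e; apply: hne.
  by have [[g' gK _] _] := Ag; rewrite -(gK (h a)) e gK.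
have [lt1|lt2|eq] := ltgtP (h a) (g a).
- have gag : g a < H2 (g a) by rewrite H2g (aut_lt Ag).
  have [f [k [Gf [Gk Hne]]]] := core HG Ho Gh G2 dis12 dis21 ha gag lt1.
  by exists f, k; rewrite conjeq.
- have gaa : g a < a.
    rewrite ltNge; apply/negP => le.
    have : h a <= h (g a) by rewrite (aut_le Ah).
    by rewrite hga leNgt lt2.
  have H2a : H2 a = a by apply: dis12.
  have za : H2 (g a) < a by rewrite -{2}H2a (aut_lt A2).
  have gag : g a < H2 (g a) by rewrite H2g (aut_lt Ag).
  have [f [k [Gf [Gk Hne]]]] := core HG Ho G2 Gh dis21 dis12 gag ha za.
  exists k, f; split=> //; split=> //; rewrite conjeq // => E.
  by apply: Hne; rewrite E.
- exfalso; apply: hne.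
  have : h (h a) = h a by rewrite eq hga.
  by have [[h' hK _] _] := Ah; move=> e; rewrite -(hK (h a)) e hK.
Qed.

Lemma maxdual (x y : T) : (Order.max (x : T^d) y) = Order.min x y.
Proof. by rewrite /Order.max /Order.min ltEdual; case: ltgtP => // ->. Qed.

Lemma mindual (x y : T) : (Order.min (x : T^d) y) = Order.max x y.
Proof. by rewrite /Order.max /Order.min ltEdual; case: ltgtP => // ->. Qed.

Lemma lperm_dual G : l_perm_group G -> @l_perm_group _ T^d G.
Proof.
case=> Ha Hid Hm Hi Hl; split=> //.
- move=> f Gf; have [Hb Hmo] := Ha f Gf; split=> // x y.
  by rewrite !leEdual Hmo.
- move=> f g Gf Gg; have [Hmax Hmin] := Hl f g Gf Gg; split.
  + refine (@eq_ind _ _ G Hmin _ _).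
    by apply: functional_extensionality => x; rewrite maxdual.
  + refine (@eq_ind _ _ G Hmax _ _).
    by apply: functional_extensionality => x; rewrite mindual.
Qed.

Lemma o2_dual G : o2_transitive G -> @o2_transitive _ T^d G.
Proof.
move=> Ho a b c e; rewrite !ltEdual => ab ce.
by have [g [Gg [gb ga]]] := Ho b a e c ab ce; exists g.
Qed.

End Aux.

Theorem lemma3p1 (disp : Order.disp_t) (T : orderType disp)
  (G : (T -> T) -> Prop)
  (HG : l_perm_group G) (H2 : o2_transitive G)
  (g h : T -> T) (Gg : G g) (Gh : G h)
  (hne1 : h <> id)
  (hdisj : forall x : T, psupp h x -> ~ psupp (pconj h g) x) :
  exists f k : T -> T, G f /\ G k /\
    pmul (pcomm (oinv h) (pconj h f))
         (pcomm (oinv (pconj h g)) (pconj h (pmul g k)))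
    <>
    pmul (pcomm (oinv (pconj h g)) (pconj h (pmul g k)))
         (pcomm (oinv h) (pconj h f)).
Proof.
have [a ha] : exists a, h a <> a.
  apply: NNPP => N; apply: hne1; apply: functional_extensionality => x.
  by apply: NNPP => hx; apply: N; exists x.
have [lt|gt|eq] := ltgtP a (h a).
- exact: (main_inc HG H2 Gg Gh hdisj lt).
- have ha' : (a : T^d) < h a by rewrite ltEdual.
  exact: (@main_inc _ T^d G (lperm_dual HG) (o2_dual H2) g h Gg Gh hdisj a ha').
- by exfalso; apply: ha.
Qed.
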